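(* There exist decision trees $T=T_n:\{0,1\}^{n}\times\{0,1\}^{\binom{n}{2}}\to\{0,1\}$ (one for each number of vertices $n\ge 2$), each evaluable in time polynomial in $n$, and a constant $l$ (independent of $n$), such that the local-iteration algorithm $\mathcal{A}^l[T]$ can be evaluated in time polynomial in $n$, but $\mathcal{A}^l[T]$, viewed as a Boolean function of its input bits (the initialization vector in $\{0,1\}^n$ and the $\binom{n}{2}$ adjacency bits of the graph), cannot be represented by decision trees of size polynomial in $n$.
   Context: Graphs are simple labeled graphs on vertex set $[n]=\{1,\dots,n\}$, encoded by their $\binom{n}{2}$ adjacency bits; $\mathcal{N}(v)$ denotes the neighborhood of $v$. A decision tree $T:\{0,1\}^D\to\{0,1\}$ is a rooted binary tree whose internal nodes are labeled by literals ($x_i$ or $\neg x_i$) of input variables and whose leaves are labeled $0$ or $1$; each input follows a root-to-leaf path and outputs the leaf label; its size is its number of nodes. For an aggregation function $g$ taking the previous hidden bits, the graph $G$ and a vertex $v$, the local-iteration algorithm $\mathcal{A}^l[g]:\{0,1\}^n\times\mathcal{G}_n\to\{0,1\}$ on input $(\textsc{Init},G)$ sets $h_{v,0}=\textsc{Init}(v)$ for all $v\in[n]$, then for $t=1,\dots,l$ and all $v\in[n]$ sets $h_{v,t}=g\big((h_{u,t-1})_{u\in\mathcal{N}(v)},G,v\big)$, and returns $h_{n,l}$. Here the aggregator is a decision tree $T$ reading the bits of previous hidden states and the adjacency bits. *)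

(* Defs.v *)
From mathcomp Require Import all_boot.
Set Implicit Arguments. Unset Strict Implicit. Unset Printing Implicit Defensive.

(* Adjacency-bit indices of a simple graph on [n] = 'I_n : unordered pairs
   {i,j}, represented as ordered pairs (i,j) with i < j.  There are
   binomial(n,2) of them. *)
Definition edge (n : nat) := {p : 'I_n * 'I_n | p.1 < p.2}.

Definition graph (n : nat) := edge n -> bool.

(* Input variables of the aggregator / of A^l[T]: n "vertex" bits
   (previous hidden states, resp. the initialization vector) followed by
   the binomial(n,2) adjacency bits. *)
Definition var (n : nat) := ('I_n + edge n)%type.

Definition adj n (G : graph n) (u v : 'I_n) : bool :=
  [exists e : edge n, G e &&
     ((((val e).1 == u) && ((val e).2 == v)) ||
      (((val e).1 == v) && ((val e).2 == u)))].

(* Decision trees over variables of type X: internal nodes are labeled by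
   a literal (x, true) = x or (x, false) = ~x, with two subtrees; on input
   a, if the literal is true we go to the second subtree, else the first. *)
Inductive dtree (X : Type) :=
| Leaf of bool
| Node of X & bool & dtree X & dtree X.
Arguments Leaf {X}.

Definition lit_val X (a : X -> bool) (x : X) (pos : bool) : bool :=
  if pos then a x else ~~ a x.

Fixpoint deval X (T : dtree X) (a : X -> bool) : bool :=
  match T with
  | Leaf b => b
  | Node x pos t0 t1 => if lit_val a x pos then deval t1 a else deval t0 a
  end.

Fixpoint dsize X (T : dtree X) : nat :=
  match T with
  | Leaf _ => 1
  | Node _ _ t0 t1 => (dsize t0 + dsize t1).+1
  end.

Fixpoint dcost X (T : dtree X) (a : X -> bool) : nat :=
  match T with
  | Leaf _ => 1
  | Node x pos t0 t1 => (if lit_val a x pos then dcost t1 a else dcost t0 a).+1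
  end.

Definition agg_input n (G : graph n) (h : 'I_n -> bool) (v : 'I_n) : var n -> bool :=
  fun x => match x with
           | inl u => adj G u v && h u
           | inr e => G e
           end.

Fixpoint hidden n (T : dtree (var n)) (init : 'I_n -> bool) (G : graph n)
    (t : nat) : 'I_n -> bool :=
  match t with
  | 0 => init
  | t'.+1 => fun v => deval T (agg_input G (hidden T init G t') v)
  end.

(* A^l[T] as a Boolean function of its input bits (Init, G):
   returns h_{n,l}, the state of the last vertex (index n-1 in 'I_n). *)
Definition local_iter n (T : dtree (var n)) (l : nat) (a : var n -> bool) : bool :=
  [exists v : 'I_n,
     (val v == n.-1) && hidden T (fun u => a (inl u)) (fun e => a (inr e)) l v].

Definition local_iter_cost n (T : dtree (var n)) (l : nat) (a : var n -> bool) : nat :=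
  \sum_(t < l) \sum_(v : 'I_n)
     dcost T (agg_input (fun e => a (inr e))
                        (hidden T (fun u => a (inl u)) (fun e => a (inr e)) t) v).

(* Main.v *)
Require Import Defs.
From mathcomp Require Import all_boot.
From mathcomp Require Import zify.
Set Implicit Arguments. Unset Strict Implicit. Unset Printing Implicit Defensive.

Fixpoint par_tree X (s : seq X) (b : bool) : dtree X :=
  match s with
  | [::] => Leaf b
  | x :: s' => Node x true (par_tree s' b) (par_tree s' (~~ b))
  end.

Lemma par_tree_eval X (s : seq X) b a :
  deval (par_tree s b) a = b (+) \big[addb/false]_(y <- s) a y.
Proof.
elim: s b => [|x s IH] b /=; first by rewrite big_nil addbF.
rewrite big_cons /lit_val; case: (a x); rewrite IH /=.
  by rewrite addNb addbN.
by [].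
Qed.

Lemma par_tree_size X (s : seq X) b : dsize (par_tree s b) < 2 ^ (size s).+1.
Proof.
elim: s b => [|x s IH] b //=.
rewrite [2 ^ _]expnS mul2n -addnn.
have := IH b; have := IH (~~ b); lia.
Qed.

Lemma dcost_size X (T : dtree X) a : dcost T a <= dsize T.
Proof.
elim: T => [b|x pos t0 IH0 t1 IH1] //=.
case: (lit_val a x pos).
  by rewrite ltnS (leq_trans (IH1)) // leq_addl.
by rewrite ltnS (leq_trans (IH0)) // leq_addr.
Qed.

Definition outS (X : eqType) (I : finType) (f : I -> X) (S : {set I}) (x : X) :=
  forall i, i \in S -> f i <> x.

Lemma lower (X : eqType) (I : finType) (f : I -> X) (D : dtree X) :
  forall (S : {set I}) (a0 : X -> bool) (c : bool),
  {in S &, injective f} ->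
  (forall a, (forall x, outS f S x -> a x = a0 x) ->
     deval D a = c (+) \big[addb/false]_(i in S) a (f i)) ->
  2 ^ #|S| <= dsize D.
Proof.
elim: D => [b|x pos t0 IH0 t1 IH1] S a0 c inj H /=.
  case: (set_0Vmem S) => [->|[i iS]]; first by rewrite cards0.
  exfalso.
  pose a1 (bb : bool) := fun y => if y == f i then bb else a0 y.
  have key : forall bb, b = c (+) (bb (+) \big[addb/false]_(j in S | j != i) a0 (f j)).
    move=> bb; rewrite [b](H (a1 bb)); last first.
      by move=> y Hy; rewrite /a1; case: eqP => // E; exfalso; exact: (Hy i iS (esym E)).
    rewrite (bigD1 i iS) /= {1}/a1 eqxx; congr (_ (+) (_ (+) _)).
    apply: eq_bigr => j /andP [jS ji]; rewrite /a1; case: eqP => // E.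
    by move: ji; rewrite (inj _ _ jS iS E) eqxx.
  have := key true; rewrite (key false) => /eqP.
  by case: (c); case: (\big[addb/false]_(j in S | j != i) a0 (f j)).
case: (boolP [exists i in S, f i == x]) => [/existsP [i /andP [iS /eqP fi]]|nS].
  have Hs : #|S| = #|S :\ i|.+1 by rewrite (cardsD1 i) iS.
  have sub : forall bb, (forall a, (forall y, outS f (S :\ i) y -> a y = (fun z => if z == x then bb else a0 z) y) ->
     (if lit_val a x pos then deval t1 a else deval t0 a) = (c (+) bb) (+) \big[addb/false]_(j in S :\ i) a (f j)).
    move=> bb a Ha.
    have ax : a x = bb.
      rewrite Ha ?eqxx // => j; rewrite in_setD1 => /andP [ji jS] E.
      by move: ji; rewrite (inj _ _ jS iS (etrans E (esym fi))) eqxx.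
    have E := H a; rewrite /= in E; rewrite E; last first.
      move=> y Hy; rewrite Ha; last by move=> j; rewrite in_setD1 => /andP [_ jS]; exact: Hy.
      by case: eqP => // yx; exfalso; exact: (Hy i iS (etrans fi (esym yx))).
    rewrite (bigD1 i iS) /= fi ax addbA; congr (_ (+) _).
    by apply: eq_bigl => j; rewrite in_setD1 andbC.
  have injS : {in S :\ i &, injective f}.
    by apply: sub_in2 inj => j; rewrite in_setD1 => /andP [].
  have axx : forall bb a, (forall y, outS f (S :\ i) y -> a y = (fun z => if z == x then bb else a0 z) y) -> a x = bb.
    move=> bb a Ha; rewrite Ha ?eqxx // => j; rewrite in_setD1 => /andP [ji jS] E.
    by move: ji; rewrite (inj _ _ jS iS (etrans E (esym fi))) eqxx.
  have h1 : 2 ^ #|S :\ i| <= dsize t1.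
    apply: (IH1 _ (fun z => if z == x then pos else a0 z) (c (+) pos) injS) => a Ha.
    by rewrite -(sub pos a Ha) /lit_val (axx pos a Ha); case: (pos).
  have h0 : 2 ^ #|S :\ i| <= dsize t0.
    apply: (IH0 _ (fun z => if z == x then ~~ pos else a0 z) (c (+) ~~ pos) injS) => a Ha.
    by rewrite -(sub (~~ pos) a Ha) /lit_val (axx (~~ pos) a Ha); case: (pos).
  rewrite Hs expnS; lia.
have ox : outS f S x.
  move=> j jS E; move/existsP: nS; apply; exists j; by rewrite jS E eqxx.
have lv : forall a, (forall y, outS f S y -> a y = a0 y) -> lit_val a x pos = lit_val a0 x pos.
  by move=> a Ha; rewrite /lit_val (Ha x ox).
case L: (lit_val a0 x pos).
  have : 2 ^ #|S| <= dsize t1.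
    apply: (IH1 S a0 c inj) => a Ha.
    by have := H a Ha; rewrite /= (lv a Ha) L.
  lia.
have : 2 ^ #|S| <= dsize t0.
  apply: (IH0 S a0 c inj) => a Ha.
  by have := H a Ha; rewrite /= (lv a Ha) L.
lia.
Qed.

Lemma cost_le n (T : dtree (var n)) l a : local_iter_cost T l a <= l * (n * dsize T).
Proof.
rewrite /local_iter_cost.
apply: leq_trans (_ : \sum_(t < l) \sum_(v : 'I_n) dsize T <= _).
  by apply: leq_sum => t _; apply: leq_sum => v _; exact: dcost_size.
by rewrite !sum_nat_const !card_ord.
Qed.

Definition U n m : seq 'I_n := [seq u : 'I_n <- index_enum 'I_n | u < m].

Lemma size_U n m : size (U n m) <= m.
Proof.
rewrite -(size_map val) -[m in _ <= m](size_iota 0 m).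
apply: uniq_leq_size.
  rewrite map_inj_uniq; last exact: val_inj.
  by rewrite filter_uniq // index_enum_uniq.
by move=> x /mapP [u]; rewrite mem_filter => /andP [um _] ->; rewrite mem_iota.
Qed.

Definition Tn n : dtree (var n) := par_tree (map inl (U n (trunc_log 2 n))) false.

Lemma Tn_eval n x : deval (Tn n) x = \big[addb/false]_(u : 'I_n | u < trunc_log 2 n) x (inl u).
Proof. by rewrite /Tn par_tree_eval big_map big_filter. Qed.

Lemma Tn_size n : 1 <= n -> dsize (Tn n) <= 2 * n.
Proof.
move=> n1; have := par_tree_size (map (@inl 'I_n (edge n)) (U n (trunc_log 2 n))) false.
move=> h.
have := trunc_logP (isT : 1 < 2) n1.
have := size_U n (trunc_log 2 n).
move: h; rewrite -/(Tn n) size_map expnS.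
move=> h1 h2 h3.
apply: leq_trans (ltnW h1) _; rewrite leq_mul2l /=.
exact: leq_trans (leq_pexp2l (isT : 0 < 2) h2) h3.
Qed.

Lemma adj_lt n (G : graph n) (u v : 'I_n) (H : u < v) :
  adj G u v = G (exist _ (u, v) H).
Proof.
apply/existsP/idP => [[[[p1 p2] pp] /= /andP [Ge /orP [/andP [/eqP e1 /eqP e2]|/andP [/eqP e1 /eqP e2]]]]|Ge].
- subst p1 p2; by rewrite (bool_irrelevance H pp).
- by exfalso; subst p1 p2; move: (ltn_trans pp H); rewrite ltnn.
- by exists (exist _ (u, v) H); rewrite Ge /= !eqxx.
Qed.

Lemma adj_sym n (G : graph n) u v : adj G u v = adj G v u.
Proof.
by apply/existsP/existsP => [[e /andP [Ge H]]|[e /andP [Ge H]]]; exists e; rewrite Ge /= orbC.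
Qed.

Lemma card_range n lo hi : hi <= n -> hi - lo <= #|[set i : 'I_n | lo <= i < hi]|.
Proof.
move=> hn.
have P : forall j : 'I_(hi - lo), lo + j < n by move=> j; have := ltn_ord j; lia.
pose g (j : 'I_(hi - lo)) := Ordinal (P j).
have ginj : injective g by move=> j1 j2 /(congr1 val) /= /eqP; rewrite eqn_add2l => /eqP /val_inj.
rewrite -[hi - lo]card_ord -cardsT -(card_imset _ ginj).
apply: subset_leq_card; apply/subsetP => x /imsetP [j _ ->]; rewrite inE /=.
by have := ltn_ord j; lia.
Qed.

Definition fS n (p : 'I_n * 'I_n) : var n :=
  match (insub p : option (edge n)) with Some e => inr e | None => inl p.1 end.

Lemma fS_lt n (p : 'I_n * 'I_n) (H : p.1 < p.2) : fS p = inr (exist _ p H).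
Proof. by rewrite /fS insubT. Qed.

Section Main.
Variables (n h : nat).
Hypotheses (n2 : 2 <= n) (hm : h <= trunc_log 2 n) (mn : trunc_log 2 n < n).
Let m := trunc_log 2 n.
Let A := [set i : 'I_n | 0 <= i < h].
Let B := [set j : 'I_n | h <= j < m].
Let S := setX A B.
Definition a0 (x : var n) : bool :=
  match x with inl u => u < h | inr e => ((val e).2 == n.-1 :> nat) && (h <= (val e).1) end.

Lemma inS p : (p \in S) = (p.1 < h) && (h <= p.2 < m).
Proof. by rewrite !inE. Qed.

Lemma S_lt p : p \in S -> p.1 < p.2.
Proof. rewrite inS => /andP [a /andP [b _]]; exact: leq_trans a b. Qed.

Lemma injS : {in S &, injective (@fS n)}.
Proof.
move=> p q pS qS; rewrite (fS_lt (S_lt pS)) (fS_lt (S_lt qS)) => [[]] //.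
Qed.

Lemma key (a : var n -> bool) : (forall x, outS (@fS n) S x -> a x = a0 x) ->
  local_iter (Tn n) 2 a = false (+) \big[addb/false]_(p in S) a (fS p).
Proof.
move=> Ha.
have n1 : n.-1 < n by lia.
pose v0 : 'I_n := Ordinal n1.
pose G := fun e => a (inr e).
pose init := fun u => a (inl u).
have -> : local_iter (Tn n) 2 a = hidden (Tn n) init G 2 v0.
  apply/existsP/idP => [[v /andP [/eqP vE Hv]]|Hv].
    by have -> : v0 = v by apply: val_inj; rewrite /= vE.
  by exists v0; rewrite /= eqxx.
rewrite /= Tn_eval.
have adj0 : forall w : 'I_n, w < m -> adj G w v0 = (h <= w).
  move=> w wm; have wv : w < v0 by rewrite /=; lia.
  rewrite (adj_lt _ wv) /G Ha /=; first by rewrite eqxx.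
  move=> p pS; rewrite (fS_lt (S_lt pS)) => [[]] E.
  by move: pS; rewrite inS E /= => /andP [_ /andP [_]]; lia.
have init0 : forall u : 'I_n, init u = (u < h).
  move=> u; rewrite /init Ha //.
  by move=> p pS; rewrite (fS_lt (S_lt pS)).
transitivity (\big[addb/false]_(w < n | w < m) ((h <= w) &&
      \big[addb/false]_(u < n | u < m) ((u < h) && adj G u w))).
  apply: eq_bigr => w wm; rewrite /= (adj0 w wm) Tn_eval; congr (_ && _).
  by apply: eq_bigr => u _; rewrite /= init0 andbC.
rewrite -big_mkcondr.
under eq_bigr => w _ do rewrite -big_mkcondr.
rewrite exchange_big pair_big /=.
apply: eq_big => [p|p]; first by rewrite inS; case: p => [p1 p2] /=; lia.
case: p => p1 p2 /= pS'; have pS : (p1, p2) \in S by rewrite inS /=; lia.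
have lt := S_lt pS.
by rewrite (fS_lt lt) (@adj_lt n G p1 p2 lt).
Qed.

Lemma lb (D : dtree (var n)) : (forall a, deval D a = local_iter (Tn n) 2 a) ->
  2 ^ (h * (m - h)) <= dsize D.
Proof.
move=> HD; apply: (@leq_trans (2 ^ #|S|)).
  rewrite leq_pexp2l // cardsX; apply: leq_mul.
    by have := @card_range n 0 h (leq_trans hm (ltnW mn)); rewrite subn0.
  exact: card_range (ltnW mn).
apply: (@lower _ _ (@fS n) D S a0 false injS) => a Ha; rewrite HD; exact: key.
Qed.

End Main.

Theorem lemma4p1 :
  exists (T : forall n : nat, dtree (var n)) (l k : nat),
    (forall n, 2 <= n -> dsize (T n) <= n ^ k) /\
    (forall n, 2 <= n -> forall a : var n -> bool,
        local_iter_cost (T n) l a <= n ^ k) /\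
    (forall k' : nat, exists n, 2 <= n /\
        forall D : dtree (var n),
          (forall a : var n -> bool, deval D a = local_iter (T n) l a) ->
          n ^ k' < dsize D).
Proof.
exists Tn, 2, 4; split; [|split].
- move=> n n2; apply: leq_trans (Tn_size (ltnW n2)) _.
  have h1 : 2 * n <= n * n by rewrite leq_mul2r n2 orbT.
  have h2 : n * n <= n * n * (n * n) by rewrite leq_pmulr // muln_gt0; lia.
  have -> : n ^ 4 = n * n * (n * n) by rewrite !expnS expn0 !mulnA muln1.
  lia.
- move=> n n2 a; apply: leq_trans (cost_le _ _ _) _.
  have h0 := Tn_size (ltnW n2).
  have h1 : 2 * (n * dsize (Tn n)) <= 2 * (n * (2 * n)) by rewrite leq_mul2l leq_mul2l h0 orbT.
  have h2 : 4 <= n * n by have := leq_mul n2 n2.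
  have -> : n ^ 4 = n * n * (n * n) by rewrite !expnS expn0 !mulnA muln1.
  apply: leq_trans h1 _.
  have -> : 2 * (n * (2 * n)) = 4 * (n * n) by lia.
  by rewrite leq_mul2r h2 orbT.
- move=> k'; set t := k'.*2.+1.
  have tm : trunc_log 2 (2 ^ t.*2) = t.*2 by rewrite trunc_expnK.
  exists (2 ^ t.*2); split.
    by rewrite -[2]expn1 leq_exp2l // -addnn; lia.
  move=> D HD.
  have n2 : 2 <= 2 ^ t.*2 by rewrite -[2]expn1 leq_exp2l // -addnn; lia.
  have hm : t <= trunc_log 2 (2 ^ t.*2) by rewrite tm -addnn leq_addr.
  have mn : trunc_log 2 (2 ^ t.*2) < 2 ^ t.*2 by rewrite tm ltn_expl.
  have := @lb (2 ^ t.*2) t n2 hm mn D HD.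
  have -> : t * (trunc_log 2 (2 ^ t.*2) - t) = t * t by rewrite tm -addnn addnK.
  move=> H.
  apply: leq_trans H; rewrite -expnM ltn_exp2l //; rewrite /t; nia.
Qed.
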